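(* Let $\mathfrak{H}$ be a Euclidean space and let $(\mathcal{X},\mathsf{S},\gamma,(\Lambda_{a})_{a\in\mathcal{A}})$ be a spectral decomposition system for $\mathfrak{H}$ such that the set $\{\Lambda_a\}_{a\in\mathcal{A}}$ is closed in $\mathscr{L}(\mathcal{X},\mathfrak{H})$. Let $(X_n)_{n\in\mathbb{N}}$ be a sequence in $\mathfrak{H}$ converging to some $X\in\mathfrak{H}$ and, for every $n\in\mathbb{N}$, let $a_n\in\mathcal{A}_{X_n}$. Suppose that there exists $a\in\mathcal{A}$ such that $\Lambda_{a_n}\to\Lambda_a$ in $\mathscr{L}(\mathcal{X},\mathfrak{H})$. Then $a\in\mathcal{A}_X$.
   Context: A Euclidean space is a finite-dimensional real Hilbert space. $\mathscr{L}(\mathcal{X},\mathfrak{H})$ is the space of linear operators from $\mathcal{X}$ to $\mathfrak{H}$ with the operator-norm topology. A spectral decomposition system for a Euclidean space $\mathfrak{H}$ is a tuple $(\mathcal{X},\mathsf{S},\gamma,(\Lambda_a)_{a\in\mathcal{A}})$ where $\mathcal{X}$ is a Euclidean space, $\mathsf{S}$ is a group acting on $\mathcal{X}$ such that each map $x\mapsto \mathsf{s}\cdot x$ ($\mathsf{s}\in\mathsf{S}$) is a linear isometry, $\gamma\colon\mathfrak{H}\to\mathcal{X}$ is a mapping, and each $\Lambda_a\colon\mathcal{X}\to\mathfrak{H}$ is a linear isometry (linear with $\|\Lambda_a x\|=\|x\|$), such that: [A] there exists a mapping $\tau\colon\mathcal{X}\to\mathcal{X}$ with $\tau(\mathsf{s}\cdot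 x)=\tau(x)$ for all $\mathsf{s},x$, $\tau(x)\in\mathsf{S}\cdot x=\{\mathsf{s}\cdot x:\mathsf{s}\in\mathsf{S}\}$ for all $x\in\mathcal{X}$, and $\gamma\circ\Lambda_a=\tau$ for all $a\in\mathcal{A}$; [B] for every $X\in\mathfrak{H}$ there exists $a\in\mathcal{A}$ with $X=\Lambda_a\gamma(X)$; [C] $\langle X,Y\rangle\le\langle\gamma(X),\gamma(Y)\rangle$ for all $X,Y\in\mathfrak{H}$. For $X\in\mathfrak{H}$, $\mathcal{A}_X=\{a\in\mathcal{A}: X=\Lambda_a\gamma(X)\}$. *)

(* Defs.v *)
From HB Require Import structures.
From mathcomp Require Import all_boot all_order all_algebra.
From mathcomp Require Import reals.
Set Implicit Arguments. Unset Strict Implicit. Unset Printing Implicit Defensive.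
Import Order.TTheory GRing.Theory Num.Theory.
Local Open Scope ring_scope.

(* A Euclidean space of dimension n is modelled as 'rV[R]_n with the standard
   inner product; linear maps 'rV_m -> 'rV_n are matrices acting on the right. *)
Definition inner (R : realType) (n : nat) (u v : 'rV[R]_n) : R := (u *m v^T) 0 0.
Definition enorm (R : realType) (n : nat) (u : 'rV[R]_n) : R := Num.sqrt (inner u u).

Definition is_group (S : Type) (mulS : S -> S -> S) (oneS : S) (invS : S -> S) :=
  [/\ forall s t u, mulS s (mulS t u) = mulS (mulS s t) u,
      forall s, mulS oneS s = s, forall s, mulS s oneS = s,
      forall s, mulS (invS s) s = oneS & forall s, mulS s (invS s) = oneS].

Definition isometric_action (R : realType) (m : nat) (S : Type)
  (mulS : S -> S -> S) (oneS : S) (act : S -> 'rV[R]_m -> 'rV[R]_m) :=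
  [/\ forall x, act oneS x = x,
      forall s t x, act (mulS s t) x = act s (act t x),
      forall s (k : R) x y, act s (k *: x + y) = k *: act s x + act s y
    & forall s x, enorm (act s x) = enorm x].

Definition spectral_decomposition_system (R : realType) (n m : nat) (S : Type)
  (mulS : S -> S -> S) (oneS : S) (invS : S -> S) (act : S -> 'rV[R]_m -> 'rV[R]_m)
  (gamma : 'rV[R]_n -> 'rV[R]_m) (A : Type) (Lam : A -> 'M[R]_(m, n)) : Prop :=
  [/\ is_group mulS oneS invS,
      isometric_action mulS oneS act &
      forall a x, enorm (x *m Lam a) = enorm x] /\
  [/\
      (exists tau : 'rV[R]_m -> 'rV[R]_m,
         [/\ forall s x, tau (act s x) = tau x,
             forall x, exists s, tau x = act s x
           & forall a x, gamma (x *m Lam a) = tau x]),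
      (forall X, exists a, X = gamma X *m Lam a)
    &
      (forall X Y, inner X Y <= inner (gamma X) (gamma Y))].

Definition A_of (R : realType) (n m : nat) (A : Type) (gamma : 'rV[R]_n -> 'rV[R]_m)
  (Lam : A -> 'M[R]_(m, n)) (X : 'rV[R]_n) (a : A) : Prop := X = gamma X *m Lam a.

Definition opnorm_le (R : realType) (m n : nat) (L : 'M[R]_(m, n)) (eps : R) : Prop :=
  forall x : 'rV[R]_m, enorm (x *m L) <= eps * enorm x.

Definition op_cvg (R : realType) (m n : nat) (L_ : nat -> 'M[R]_(m, n)) (L : 'M[R]_(m, n)) :=
  forall eps : R, 0 < eps -> exists N, forall k, (N <= k)%N -> opnorm_le (L_ k - L) eps.

Definition op_closed (R : realType) (m n : nat) (P : 'M[R]_(m, n) -> Prop) :=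
  forall L, (forall eps : R, 0 < eps -> exists M, P M /\ opnorm_le (M - L) eps) -> P L.

Definition vec_cvg (R : realType) (n : nat) (X_ : nat -> 'rV[R]_n) (X : 'rV[R]_n) :=
  forall eps : R, 0 < eps -> exists N, forall k, (N <= k)%N -> enorm (X_ k - X) <= eps.

(* Main.v *)
Require Import Defs.
From mathcomp Require Import all_boot all_order all_algebra.
From mathcomp Require Import reals.
From mathcomp Require Import ring lra.
Import Order.TTheory GRing.Theory Num.Theory.
Local Open Scope ring_scope.

Section Aux.
Context {R : realType} {n : nat}.
Implicit Types (u v w : 'rV[R]_n).

Lemma innerC u v : inner u v = inner v u.
Proof.
rewrite /inner; have -> : v *m u^T = (u *m v^T)^T by rewrite trmx_mul trmxK.
by rewrite [RHS]mxE.
Qed.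

Lemma innerDl u v w : inner (u + v) w = inner u w + inner v w.
Proof. by rewrite /inner mulmxDl mxE. Qed.

Lemma innerNl u w : inner (- u) w = - inner u w.
Proof. by rewrite /inner mulNmx mxE. Qed.

Lemma innerZl (k : R) u w : inner (k *: u) w = k * inner u w.
Proof. by rewrite /inner -scalemxAl mxE. Qed.

Lemma innerBl u v w : inner (u - v) w = inner u w - inner v w.
Proof. by rewrite innerDl innerNl. Qed.

Lemma innerBr u v w : inner w (u - v) = inner w u - inner w v.
Proof. by rewrite innerC innerBl (innerC u) (innerC v). Qed.

Lemma innerZr (k : R) u w : inner w (k *: u) = k * inner w u.
Proof. by rewrite innerC innerZl innerC. Qed.

Lemma innerDr u v w : inner w (u + v) = inner w u + inner w v.
Proof. by rewrite innerC innerDl (innerC u) (innerC v). Qed.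

Lemma inner_sum u : inner u u = \sum_i u 0 i * u 0 i.
Proof. by rewrite /inner mxE; apply: eq_bigr => i _; rewrite mxE. Qed.

Lemma inner_ge0 u : 0 <= inner u u.
Proof. rewrite inner_sum; apply: sumr_ge0 => i _; rewrite -expr2; exact: sqr_ge0. Qed.

Lemma inner_eq0 u : inner u u = 0 -> u = 0.
Proof.
rewrite inner_sum => H0.
have H : forall i, u 0 i * u 0 i = 0.
  by move=> i; apply: (psumr_eq0P _ H0) => // j _; rewrite -expr2 sqr_ge0.
apply/rowP => i; rewrite !mxE.
by have /eqP := H i; rewrite -expr2 sqrf_eq0 => /eqP.
Qed.

Lemma inner0r u : inner u 0 = 0.
Proof. by rewrite /inner trmx0 mulmx0 mxE. Qed.

Lemma innerNN u : inner (- u) (- u) = inner u u.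
Proof. by rewrite innerNl innerC innerNl opprK. Qed.

Lemma CS u v : inner u v ^+ 2 <= inner u u * inner v v.
Proof.
have [c0|cpos] := eqVneq (inner v v) 0.
  by rewrite (inner_eq0 _ c0) !inner0r expr0n mulr0.
have cgt : 0 < inner v v by rewrite lt_def cpos inner_ge0.
have := inner_ge0 (inner v v *: u - inner u v *: v).
rewrite innerBl !innerBr !innerZl !innerZr (innerC v u).
set a := inner u u; set b := inner u v; set c := inner v v => H.
have : 0 <= c * (c * a - b ^+ 2) by nra.
rewrite pmulr_rge0 // subr_ge0 => H2; nra.
Qed.

Definition en u := enorm u.

Lemma enorm_ge0 u : 0 <= enorm u.
Proof. exact: sqrtr_ge0. Qed.

Lemma enorm_sq u : enorm u ^+ 2 = inner u u.
Proof. exact/sqr_sqrtr/inner_ge0. Qed.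

Lemma enormN u : enorm (- u) = enorm u.
Proof. by rewrite /enorm innerNN. Qed.

Lemma enormD u v : enorm (u + v) <= enorm u + enorm v.
Proof.
rewrite {1}/enorm -(ger0_norm (addr_ge0 (enorm_ge0 u) (enorm_ge0 v))) -sqrtr_sqr.
rewrite ler_sqrt; last exact: sqr_ge0.
rewrite innerDl !innerDr (innerC v u).
have := CS u v; have := enorm_sq u; have := enorm_sq v.
have := enorm_ge0 u; have := enorm_ge0 v.
set a := enorm u; set b := enorm v; set x := inner u v => ? ? <- <- H.
have ab0 : 0 <= a * b by apply: mulr_ge0.
have : x <= a * b.
  rewrite leNgt; apply/negP => hx.
  have : (a * b) ^+ 2 < x ^+ 2.
    by rewrite ltr_pXn2r // nnegrE; exact: ltW (le_lt_trans ab0 hx).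
  by rewrite exprMn ltNge H.
move=> hx; rewrite sqrrD; lra.
Qed.

Lemma enorm_eq0 u : enorm u = 0 -> u = 0.
Proof. by move=> h; apply: inner_eq0; rewrite -enorm_sq h expr0n. Qed.

End Aux.

Theorem proposition2p17 (R : realType) (n m : nat) (S : Type)
  (mulS : S -> S -> S) (oneS : S) (invS : S -> S) (act : S -> 'rV[R]_m -> 'rV[R]_m)
  (gamma : 'rV[R]_n -> 'rV[R]_m) (A : Type) (Lam : A -> 'M[R]_(m, n)) :
  spectral_decomposition_system mulS oneS invS act gamma Lam ->
  op_closed (fun L => exists a, L = Lam a) ->
  forall (X_ : nat -> 'rV[R]_n) (X : 'rV[R]_n) (a_ : nat -> A),
  vec_cvg X_ X ->
  (forall k, A_of gamma Lam (X_ k) (a_ k)) ->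
  forall a : A, op_cvg (fun k => Lam (a_ k)) (Lam a) ->
  A_of gamma Lam X a.
Proof.
move=> [[_ _ Liso] [_ HB HC]] _ X_ X a_ HX HA a Hop.
have gnorm Y : enorm (gamma Y) = enorm Y.
  by case: (HB Y) => b hb; rewrite {2}hb Liso.
have ginner Y : inner (gamma Y) (gamma Y) = inner Y Y by rewrite -!enorm_sq gnorm.
have gne Y Z : enorm (gamma Y - gamma Z) <= enorm (Y - Z).
  rewrite /enorm ler_sqrt ?inner_ge0 // innerBl !innerBr !ginner.
  rewrite !innerBl (innerC Z Y) (innerC (gamma Z) (gamma Y)).
  have := HC Y Z; lra.
rewrite /A_of; apply/eqP; rewrite -subr_eq0; apply/eqP; apply: enorm_eq0.
set D := X - gamma X *m Lam a.
have key e : 0 < e -> e <= 1 -> enorm D <= e * (3 + enorm X).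
  move=> e0 e1; case: (HX e e0) => N1 h1; case: (Hop e e0) => N2 h2.
  set k := maxn N1 N2.
  have hk1 := h1 k (leq_maxl _ _); have hk2 := h2 k (leq_maxr _ _).
  have eqD : D = (X - X_ k) + gamma (X_ k) *m (Lam (a_ k) - Lam a)
                 + (gamma (X_ k) - gamma X) *m Lam a.
    by rewrite mulmxBr mulmxBl -(HA k) !addrA !subrK.
  have t1 : enorm (X - X_ k) <= e by rewrite -opprB enormN.
  have nXk : enorm (X_ k) <= e + enorm X.
    have := enormD (X_ k - X) X; rewrite subrK; lra.
  have t2 : enorm (gamma (X_ k) *m (Lam (a_ k) - Lam a)) <= e * (e + enorm X).
    apply: le_trans (hk2 _) _; rewrite gnorm; apply: ler_wpM2l; lra.
  have t3 : enorm ((gamma (X_ k) - gamma X) *m Lam a) <= e by rewrite Liso; apply: le_trans (gne _ _) hk1.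
  have := enormD (X - X_ k + gamma (X_ k) *m (Lam (a_ k) - Lam a)) ((gamma (X_ k) - gamma X) *m Lam a).
  have := enormD (X - X_ k) (gamma (X_ k) *m (Lam (a_ k) - Lam a)).
  rewrite -eqD; have := enorm_ge0 X; nra.
have d0 := enorm_ge0 D; have X0 := enorm_ge0 X.
have [dz|dpos] := eqVneq (enorm D) 0; first by [].
have dgt : 0 < enorm D by rewrite lt_def dpos d0.
have Cgt : 0 < 3 + enorm X by lra.
have [hle|hgt] := lerP (enorm D / (2 * (3 + enorm X))) 1.
  have c2 : 0 < 2 * (3 + enorm X) by lra.
  have := key _ (divr_gt0 dgt c2) hle.
  have -> : enorm D / (2 * (3 + enorm X)) * (3 + enorm X) = enorm D / 2.
    by field; rewrite gt_eqF.
  lra.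
have := key 1 ltr01 (lexx 1).
move: hgt; rewrite ltr_pdivlMr ?mulr_gt0 //; lra.
Qed.
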